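(* Let $H$ be a complex Hilbert space and $\{\mathcal{U}(t)\}_{t\geq 0}$ a strongly continuous semigroup on $H$ with generator $\mathcal{L}$. Let $z\in D(\mathcal{L})$ with $z\neq 0$, let $\mathcal{P}:=(\cdot,z)(z,z)^{-1}z$ and $\mathcal{Q}:=1-\mathcal{P}$. Let $\{e^{\mathcal{LQ}t}\}_{t\geq 0}$ denote the strongly continuous semigroup generated by the operator $\mathcal{LQ}$ (with domain $D(\mathcal{LQ})=\{x\in H:\mathcal{Q}x\in D(\mathcal{L})\}$). Then $\{\mathcal{G}(t):=\mathcal{P}+\mathcal{Q}e^{\mathcal{LQ}t}\}_{t\geq 0}$ is a strongly continuous semigroup on $H$.
   Context: The scalar product $(\cdot,\cdot)$ on $H$ is conjugate-linear in its second argument. The generator is defined by $\mathcal{L}x:=\lim_{h\searrow 0}\frac1h[\mathcal{U}(h)x-x]$ on the domain $D(\mathcal{L})$ of all $x$ for which this limit exists in $H$. The notation $\{e^{\mathcal{A}t}\}_{t\ge0}$ means the strongly continuous semigroup generated by $\mathcal{A}$ (not an exponential series). *)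

(* Defs.v *)
From HB Require Import structures.
From mathcomp Require Import all_boot all_order all_algebra.
From mathcomp Require Import all_classical all_reals all_analysis.
From mathcomp.real_closed Require Import complex.
Set Implicit Arguments. Unset Strict Implicit. Unset Printing Implicit Defensive.
Import Order.TTheory GRing.Theory Num.Theory.
Import numFieldNormedType.Exports.
Local Open Scope ring_scope.
Local Open Scope classical_set_scope.

Notation Cplx R := (complex R).

(* ip is an inner product on H (conjugate-linear in its second argument)
   inducing the norm of H; with H complete this makes H a complex Hilbert space. *)
Definition is_inner_product (R : realType) (H : normedModType (Cplx R))
    (ip : H -> H -> Cplx R) : Prop :=
  [/\ forall (a : Cplx R) (x y w : H), ip (a *: x + y) w = a * ip x w + ip y w,
      forall x y : H, ip x y = Num.conj (ip y x),
      forall x : H, 0 <= ip x x,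
      forall x : H, ip x x = 0 -> x = 0
    & forall x : H, `|x| ^+ 2 = ip x x].

(* Strongly continuous semigroup {U t}_{t >= 0} of bounded linear operators on H
   (values of U at negative times are irrelevant). *)
Definition C0_semigroup (R : realType) (H : normedModType (Cplx R))
    (U : R -> H -> H) : Prop :=
  [/\ forall t, 0 <= t -> forall (a : Cplx R) (x y : H), U t (a *: x + y) = a *: U t x + U t y,
      forall t, 0 <= t -> continuous (U t),
      forall x, U 0 x = x,
      forall s t, 0 <= s -> 0 <= t -> forall x, U (s + t) x = U s (U t x)
    & forall x, (fun t => U t x) @ at_right (0 : R) --> x].

Definition diff_quot (R : realType) (H : normedModType (Cplx R))
    (U : R -> H -> H) (x : H) : R -> H :=
  fun h => ((h%:C)%C)^-1 *: (U h x - x).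

(* is_generator U x y  <->  x \in D(L) and L x = y, where L is the generator of U:
   L x := lim_{h \searrow 0} (U h x - x)/h. *)
Definition is_generator (R : realType) (H : normedModType (Cplx R))
    (U : R -> H -> H) (x y : H) : Prop :=
  diff_quot U x @ at_right (0 : R) --> y.

Definition projP (R : realType) (H : normedModType (Cplx R))
    (ip : H -> H -> Cplx R) (z : H) : H -> H :=
  fun x => (ip x z / ip z z) *: z.

Definition projQ (R : realType) (H : normedModType (Cplx R))
    (ip : H -> H -> Cplx R) (z : H) : H -> H :=
  fun x => x - projP ip z x.

(* Main.v *)
Require Import Defs.
From HB Require Import structures.
From mathcomp Require Import all_boot all_order all_algebra.
From mathcomp Require Import all_classical all_reals all_analysis.
From mathcomp.real_closed Require Import complex.
From mathcomp Require Import ring lra.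
Import Order.TTheory GRing.Theory Num.Theory.
Import numFieldNormedType.Exports.
Local Open Scope ring_scope.
Local Open Scope classical_set_scope.

Section HRdef.
Variables (R : realType) (H : completeNormedModType (Cplx R)).

Definition nr (x : H) : R := complex.Re `|x|.

Lemma normC_real (a : Cplx R) : 0 <= a -> a = ((complex.Re a)%:C)%C.
Proof. case: a => a b; rewrite lecE /= => /andP[/eqP -> _] //. Qed.

Lemma nrE (x : H) : `|x| = ((nr x)%:C)%C.
Proof. exact: normC_real. Qed.

Lemma nr_ge0 x : 0 <= nr x.
Proof. by have := normr_ge0 x; rewrite nrE lecR. Qed.

Lemma normCr (r : R) : `|(r%:C)%C : Cplx R| = ((`|r|)%:C)%C.
Proof. by rewrite normc_def /= expr0n /= addr0 sqrtr_sqr. Qed.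

Definition HR : Type := H.
HB.instance Definition _ := Complete.copy HR H.
HB.instance Definition _ := GRing.Zmodule.copy HR H.

Definition scR (r : R) (x : HR) : HR := ((r%:C)%C : Cplx R) *: (x : H).

Lemma scR_A a b v : scR a (scR b v) = scR (a * b) v.
Proof. by rewrite /scR scalerA rmorphM. Qed.
Lemma scR_1 : left_id 1 scR.
Proof. by move=> v; rewrite /scR rmorph1 scale1r. Qed.
Lemma scR_Dr : right_distributive scR +%R.
Proof. by move=> a u v; rewrite /scR scalerDr. Qed.
Lemma scR_Dl v : {morph scR^~ v: a b / a + b}.
Proof. by move=> a b; rewrite /scR rmorphD scalerDl. Qed.

HB.instance Definition _ := GRing.Zmodule_isLmodule.Build R HR scR_A scR_1 scR_Dr scR_Dl.

Definition ballR (x : HR) (e : R) (y : HR) : Prop := @ball _ H x ((e%:C)%C) y.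

Lemma ballR_center x (e : R) : 0 < e -> ballR x e x.
Proof. by move=> e0; apply: ballxx; rewrite ltcR. Qed.
Lemma ballR_sym x y (e : R) : ballR x e y -> ballR y e x.
Proof. exact: ball_sym. Qed.
Lemma ballR_triangle x y z e1 e2 : ballR x e1 y -> ballR y e2 z -> ballR x (e1 + e2) z.
Proof. by move=> h1 h2; rewrite /ballR rmorphD; apply: ball_triangle h1 h2. Qed.
Lemma ballR_ent : (@entourage HR) = entourage_ ballR.
Proof.
rewrite /= -(@entourage_ballE _ H) /entourage_ /ballR.
apply/funext => A; apply/propext; split.
  move=> [e e0 sA]; exists (complex.Re e).
    by have := e0; rewrite /= {1}(@normC_real e (ltW e0)) ltcR.
  by rewrite -normC_real //; apply: ltW.
by move=> [e e0 sA]; exists ((e%:C)%C) => //=; rewrite ltcR.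
Qed.

HB.instance Definition _ := Uniform_isPseudoMetric.Build R HR
  ballR_center ballR_sym ballR_triangle ballR_ent.

Lemma nr_D (x y : HR) : nr (x + y) <= nr x + nr y.
Proof. by have := ler_normD (x : H) y; rewrite !nrE -rmorphD lecR. Qed.
Lemma nr_eq0 (x : HR) : nr x = 0 -> x = 0.
Proof. by move=> h; apply/(@normr0_eq0 _ H); rewrite nrE h. Qed.
Lemma nr_Mn (x : HR) n : nr (x *+ n) = nr x *+ n.
Proof. by rewrite /nr (@normrMn _ H) raddfMn. Qed.
Lemma nr_N (x : HR) : nr (- x) = nr x.
Proof. by rewrite /nr (@normrN _ H). Qed.

HB.instance Definition _ := Num.Zmodule_isNormed.Build R HR nr_D nr_eq0 nr_Mn nr_N.

Lemma ballR_norm : (@ball R HR) = ball_ (fun x : HR => `| x |).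
Proof.
apply/funext => x; apply/funext => e; apply/funext => y.
change (@ball _ H x ((e%:C)%C) y = (nr (x - y) < e)); rewrite -(@ball_normE _ H) /ball_ /= nrE ltcR //.
Qed.

HB.instance Definition _ := NormedZmod_PseudoMetric_eq.Build R HR ballR_norm.

Lemma nr_Z (l : R) (x : HR) : `| l *: x | = `| l | * `| x |.
Proof.
change (nr (((l%:C)%C : Cplx R) *: (x : H)) = `|l| * nr x); rewrite /nr (@normrZ _ H) normCr nrE.
by rewrite -rmorphM.
Qed.

HB.instance Definition _ :=
  PseudoMetricNormedZmod_Lmodule_isNormedModule.Build R HR nr_Z.


Section IP.
Variable ip : H -> H -> Cplx R.
Hypothesis hip : is_inner_product ip.

Lemma ip_lin a x y w : ip (a *: x + y) w = a * ip x w + ip y w.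
Proof. by case: hip. Qed.
Lemma ip_sym x y : ip x y = Num.conj (ip y x).
Proof. by case: hip. Qed.
Lemma ip0 w : ip 0 w = 0.
Proof.
have := ip_lin 1 0 0 w; rewrite scale1r addr0 mul1r.
by rewrite -[X in X = _]addr0 => /addrI /esym.
Qed.
Lemma ipD x y w : ip (x + y) w = ip x w + ip y w.
Proof. by rewrite -[x]scale1r ip_lin mul1r scale1r. Qed.
Lemma ipZ a x w : ip (a *: x) w = a * ip x w.
Proof. by rewrite -[a *: x]addr0 ip_lin ip0 addr0. Qed.
Lemma ipDr x y w : ip w (x + y) = ip w x + ip w y.
Proof. by rewrite ip_sym ipD rmorphD [ip w x]ip_sym [ip w y]ip_sym. Qed.
Lemma ipZr a x w : ip w (a *: x) = Num.conj a * ip w x.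
Proof. by rewrite ip_sym ipZ rmorphM [ip w x]ip_sym. Qed.
Lemma ip_norm x : `|x| ^+ 2 = ip x x.
Proof. by case: hip. Qed.

Lemma ip_quad x z c : `|x + c *: z| ^+ 2 =
  ip x x + Num.conj c * ip x z + c * ip z x + c * Num.conj c * ip z z.
Proof. by rewrite ip_norm ipD !ipDr !ipZ !ipZr; ring. Qed.

Lemma ip_polar x z : ip x z = 4%:R^-1 * (`|x + 1 *: z| ^+ 2 - `|x + (-1) *: z| ^+ 2
   + 'i * `|x + 'i *: z| ^+ 2 - 'i * `|x + (- 'i) *: z| ^+ 2).
Proof.
rewrite !ip_quad.
have cNi : Num.conj (-'i) = 'i :> Cplx R by rewrite -conjCi conjCK.
have i2 : 'i * 'i = -1 :> Cplx R by rewrite -expr2 sqrCi.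
rewrite cNi conjCi rmorph1 rmorphN1.
apply: (@mulfI _ 4%:R); first by rewrite pnatr_eq0.
rewrite mulrA mulfV ?pnatr_eq0 // mul1r.
ring: i2.
Qed.

Lemma ip_cont z : continuous (fun x : H => (ip x z : (Cplx R)^o)).
Proof.
move=> x0.
have -> : (fun x : H => (ip x z : (Cplx R)^o)) = (fun x : H => 4%:R^-1 * (`|x + 1 *: z| ^+ 2 - `|x + (-1) *: z| ^+ 2
   + 'i * `|x + 'i *: z| ^+ 2 - 'i * `|x + (- 'i) *: z| ^+ 2)).
  by apply/funext => x; rewrite ip_polar.
have hc : forall c : Cplx R, (fun x : H => (`|x + c *: z| ^+ 2 : (Cplx R)^o)) @ x0 --> (`|x0 + c *: z| ^+ 2 : (Cplx R)^o).
  move=> c; rewrite expr2; under eq_fun do rewrite expr2.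
  by apply: cvgM; apply: cvg_norm; apply: cvgD; [exact: cvg_id | exact: cvg_cst | exact: cvg_id | exact: cvg_cst].
apply: cvgMl_tmp; apply: cvgB; [apply: cvgD; [apply: cvgB|apply: cvgMl_tmp]|apply: cvgMl_tmp]; exact: hc.
Qed.

End IP.

Lemma near_right0 (P : R -> Prop) : (\forall t \near (0:R)^'+, P t) ->
  exists2 d, 0 < d & forall t, 0 < t < d -> P t.
Proof.
rewrite near_withinE => /nbhs_ballP[d d0 hd]; exists d => // t /andP[t0 td].
apply: hd => //; rewrite /ball /= sub0r normrN gtr0_norm //.
Qed.

Lemma cvg_eps (f : R -> HR) (y : HR) : f @ (0:R)^'+ --> y ->
  forall e, 0 < e -> exists2 d, 0 < d & forall t, 0 < t < d -> `|y - f t| < e.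
Proof.
move=> /cvgrPdist_lt hf e e0; exact: near_right0 (hf e e0).
Qed.

Lemma small_inv (d : R) : 0 < d -> exists N : nat, forall n, (N <= n)%N -> n.+1%:R^-1 < d.
Proof.
move=> d0; exists (Num.truncn d^-1) => n hn.
rewrite invf_plt ?posrE ?ltr0n // (lt_le_trans (truncnS_gt _)) // ler_nat.
by rewrite ltnS.
Qed.

Section SG.
Variable V : R -> H -> H.
Hypothesis hV : C0_semigroup V.

Lemma V_lin t : 0 <= t -> forall a x y, V t (a *: x + y) = a *: V t x + V t y.
Proof. by case: hV => h _ _ _ _; apply: h. Qed.
Lemma V_cont t : 0 <= t -> continuous (V t).
Proof. by case: hV => _ h _ _ _; apply: h. Qed.
Lemma V_0 x : V 0 x = x.
Proof. by case: hV => _ _ h _ _; apply: h. Qed.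
Lemma V_sg s t : 0 <= s -> 0 <= t -> forall x, V (s + t) x = V s (V t x).
Proof. by case: hV => _ _ _ h _; apply: h. Qed.
Lemma V_sc x : (fun t => V t x) @ (0:R)^'+ --> x.
Proof. by case: hV => _ _ _ _ h; apply: h. Qed.

Lemma local_bound : exists2 d : R, 0 < d &
  exists M : R, forall h, 0 < h < d -> forall x : HR, `|x| <= 1 -> `|(V h x : HR)| <= M.
Proof.
apply: contrapT => nb.
have hg : forall n : nat, exists hx : R * HR,
    [/\ 0 < hx.1, hx.1 < n.+1%:R^-1, `|hx.2| <= 1 & n%:R < `|(V hx.1 hx.2 : HR)|].
  move=> n; apply: contrapT => hn; apply: nb; exists n.+1%:R^-1.
    by rewrite invr_gt0 ltr0n.
  exists n%:R => h /andP[h0 hd] x hx; rewrite leNgt; apply/negP => abs.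
  by apply: hn; exists (h, x); split.
have [g hgP] := choice hg.
pose F : set (HR -> HR) := range (fun n => (V (g n).1 : HR -> HR)).
have lin_g n : linear (V (g n).1 : HR -> HR).
  move=> a u v.
  change (V (g n).1 (((a%:C)%C : Cplx R) *: u + v) =
     ((a%:C)%C : Cplx R) *: V (g n).1 u + V (g n).1 v).
  by apply: V_lin; have [+ _ _ _] := hgP n; apply: ltW.
have cont_g n : continuous (V (g n).1 : HR -> HR).
  by apply: V_cont; have [+ _ _ _] := hgP n; apply: ltW.
have UB : uniform_bounded F.
  apply: (@Banach_Steinhauss R HR HR F).
    move=> f [n _ <-]; split; last exact: lin_g.
    pose fl : {linear HR -> HR} :=
      HB.pack (V (g n).1 : HR -> HR) (GRing.isLinear.Build _ _ _ _ _ (lin_g n)).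
    exact: (bounded_funP fl).2 ((linear_bounded_continuous fl).2 (cont_g n)).
  move=> x.
  have cv : cvgn (fun n => (V (g n).1 x : HR)).
    apply/cvg_ex; exists x; apply/cvgrPdist_lt => e e0.
    have [d d0 hd] := cvg_eps _ _ (V_sc x) _ e0.
    have [N hN] := small_inv _ d0.
    exists N => // n /= hn; apply: hd.
    have [h0 h1 _ _] := hgP n; rewrite h0 /=.
    exact: lt_trans h1 (hN _ hn).
  have /pinfty_ex_gt0 [M _ hM] := cvg_seq_bounded cv.
  by exists M => f [n _ <-]; apply: hM.
have [M hM] := UB 1.
have [h0 _ hx hlt] := hgP (Num.truncn M).+1.
have := hM _ (ex_intro2 _ _ (Num.truncn M).+1 I erefl) _ hx.
move=> /(lt_le_trans hlt) /(lt_trans (truncnS_gt M)).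
by rewrite ltxx.
Qed.


Lemma V_00 t : 0 <= t -> V t 0 = 0.
Proof.
move=> t0; have := V_lin _ t0 1 0 0; rewrite !scale1r !addr0 => h.
by apply: (@addrI _ (V t 0)); rewrite addr0 -h.
Qed.
Lemma V_D t : 0 <= t -> forall x y, V t (x + y) = V t x + V t y.
Proof. by move=> t0 x y; rewrite -[x]scale1r V_lin // !scale1r. Qed.
Lemma V_Z t : 0 <= t -> forall a x, V t (a *: x) = a *: V t x.
Proof. by move=> t0 a x; rewrite -[a *: x]addr0 V_lin // V_00 // addr0. Qed.
Lemma V_N t : 0 <= t -> forall x, V t (- x) = - V t x.
Proof. by move=> t0 x; rewrite -scaleN1r V_Z // scaleN1r. Qed.
Lemma V_B t : 0 <= t -> forall x y, V t (x - y) = V t x - V t y.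
Proof. by move=> t0 x y; rewrite V_D // V_N. Qed.
Lemma V_ZR t : 0 <= t -> forall (r : R) (x : HR), (V t (r *: x) : HR) = r *: (V t x : HR).
Proof. move=> t0 r x; exact: V_Z. Qed.

Lemma hom_bound : exists2 d : R, 0 < d & exists2 M : R, 0 <= M &
  forall h, 0 <= h < d -> forall x : HR, `|(V h x : HR)| <= M * `|x|.
Proof.
have [d d0 [M hM]] := local_bound.
exists d => //; exists (Num.max M 1); first by rewrite le_max ler01 orbT.
move=> h /andP[h0 hd] x.
have [->|xn0] := eqVneq x 0.
  by rewrite (V_00 _ h0) normr0 mulr0.
have nx0 : 0 < `|x| by rewrite normr_gt0.
have [->|hn0] := eqVneq h 0.
  by rewrite V_0 ler_peMl // le_max lexx orbT.
have hp : 0 < h by rewrite lt_def hn0 h0.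
set y : HR := `|x|^-1 *: x.
have ey : x = `|x| *: y by rewrite /y scalerA mulfV ?scale1r // gt_eqF.
have ny : `|y| <= 1 by rewrite /y normrZ ger0_norm ?invr_ge0 // mulVf // gt_eqF.
rewrite {1}ey V_ZR // normrZ ger0_norm // mulrC ler_pM2r //.
apply: le_trans (hM h _ y ny) _; first by rewrite hp hd.
by rewrite le_max lexx.
Qed.


Lemma V_mul_fix z s : 0 <= s -> V s z = z -> forall n : nat, V (n%:R * s) z = z.
Proof.
move=> s0 hs; elim=> [|n IH]; first by rewrite mul0r V_0.
rewrite -natr1 mulrDl mul1r V_sg ?mulr_ge0 // hs //.
Qed.

Lemma key z : is_generator V z 0 -> forall t, 0 <= t -> V t z = z.
Proof.
move=> gz.
have [d d0 [M M0 hb]] := hom_bound.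
have tel : forall s, 0 <= s -> forall n : nat, n%:R * s < d ->
    `|(V (n%:R * s) z - z : HR)| <= n%:R * M * `|(V s z - z : HR)|.
  move=> s s0; elim=> [|n IH] hn.
    by rewrite !mul0r V_0 subrr normr0.
  have hn' : n%:R * s < d.
    apply: le_lt_trans hn; rewrite ler_wpM2r // ler_nat; exact: leqnSn.
  have ns0 : 0 <= n%:R * s by rewrite mulr_ge0.
  rewrite -natr1 mulrDl mul1r V_sg //.
  have -> : (V (n%:R * s) (V s z) - z : HR) =
     (V (n%:R * s) (V s z - z) : HR) + (V (n%:R * s) z - z : HR).
    by rewrite V_B // addrA subrK.
  apply: le_trans (ler_normD _ _) _.
  rewrite mulrDl mul1r mulrDl [X in _ <= X]addrC lerD //; last exact: IH hn'.
  by apply: hb; rewrite ns0 hn'.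
have small : forall t, 0 < t < d -> V t z = z.
  move=> t /andP[t0 td].
  have bnd : forall e, 0 < e -> `|(V t z - z : HR)| <= t * M * e.
    move=> e e0.
    have [d' d'0 hd'] := cvg_eps _ _ gz _ e0.
    have [N hN] := small_inv (d' / t) (divr_gt0 d'0 t0).
    have hN' := hN N (leqnn N).
    set s := t / N.+1%:R.
    have s0 : 0 < s by rewrite divr_gt0 // ltr0n.
    have sd' : s < d'.
      by rewrite /s mulrC -ltr_pdivlMr // mulrC.
    have ts : N.+1%:R * s = t by rewrite /s mulrC divfK // pnatr_eq0.
    clearbody s.
    have := tel s (ltW s0) N.+1; rewrite ts => /(_ td) h1.
    apply: le_trans h1 _.
    have := hd' s; rewrite s0 sd' => /(_ isT).
    rewrite /diff_quot sub0r normrN.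
    have -> : (((s%:C)%C : Cplx R)^-1 *: (V s z - z) : HR) = s^-1 *: (V s z - z : HR).
      by rewrite -fmorphV.
    rewrite normrZ ger0_norm ?invr_ge0 ?(ltW s0) // -ltr_pdivlMl ?invr_gt0 // invrK => h2.
    have -> : t * M * e = N.+1%:R * M * (s * e) by rewrite -ts; ring.
    by rewrite ler_wpM2l ?mulr_ge0 // ltW.
  suff : `|(V t z - z : HR)| = 0 by move/normr0_eq0/subr0_eq.
  apply/eqP; rewrite eq_le normr_ge0 andbT; apply/ler_addgt0Pr => e e0; rewrite add0r.
  have k0 : 0 < t * M + 1 by rewrite ltr_wpDl ?mulr_ge0 ?(ltW t0).
  apply: le_trans (bnd _ (divr_gt0 e0 k0)) _.
  rewrite mulrA ler_pdivrMr //; nra.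
move=> t t0.
have [N hN] := small_inv (d / (t + 1)) (divr_gt0 d0 (ltr_wpDl t0 ltr01)).
have hN' := hN N (leqnn N).
set s := t / N.+1%:R.
have s0 : 0 <= s by rewrite divr_ge0.
have ts : N.+1%:R * s = t by rewrite /s mulrC divfK // pnatr_eq0.
have sd : s < d.
  have t1 : 0 < t + 1 by rewrite ltr_wpDl ?ltr01.
  have e1 : (t + 1) * (t + 1)^-1 = 1 by rewrite mulfV // gt_eqF.
  have a0 : 0 < N.+1%:R^-1 :> R by rewrite invr_gt0 ltr0n.
  move: hN'; rewrite /s; set a := N.+1%:R^-1; set b := (t + 1)^-1 => hN'.
  have b0 : 0 < b by rewrite invr_gt0.
  have hdb : 0 < d * b - a by rewrite subr_gt0.
  have p := mulr_gt0 t1 hdb.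
  have e2 : d * ((t + 1) * b) = d by rewrite e1 mulr1.
  nra.
clearbody s.
rewrite -ts; apply: V_mul_fix => //.
have [->|sn0] := eqVneq s 0; first exact: V_0.
apply: small; rewrite lt_def sn0 s0 /=.
by [].
Qed.
End SG.
End HRdef.

Theorem lemma1 (R : realType) (H : completeNormedModType (Cplx R))
  (ip : H -> H -> Cplx R) (U : R -> H -> H) (z : H) (V : R -> H -> H) :
  is_inner_product ip ->
  C0_semigroup U ->
  (exists Lz : H, is_generator U z Lz) ->
  z != 0 ->
  C0_semigroup V ->
  (forall x y : H, is_generator V x y <-> is_generator U (projQ ip z x) y) ->
  C0_semigroup (fun t x => projP ip z x + projQ ip z (V t x)).
Proof.
move=> hip hU _ zn0 hV hgen.
have c0 : ip z z != 0.
  by apply: contra zn0 => /eqP h; apply/eqP; case: hip => _ _ _ hd _; apply: hd.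
set P := projP ip z; set Q := projQ ip z.
have PD x y : P (x + y) = P x + P y.
  by rewrite /P /projP (@ipD _ _ _ hip) mulrDl scalerDl.
have PZ a x : P (a *: x) = a *: P x.
  by rewrite /P /projP (@ipZ _ _ _ hip) -mulrA scalerA.
have Pz : P z = z by rewrite /P /projP mulfV // scale1r.
have PP x : P (P x) = P x by rewrite {2}/P /projP PZ Pz.
have QD x y : Q (x + y) = Q x + Q y.
  by rewrite /Q /projQ -/P PD opprD addrACA.
have QZ a x : Q (a *: x) = a *: Q x.
  by rewrite /Q /projQ -/P PZ scalerBr.
have QN x : Q (- x) = - Q x.
  by rewrite -scaleN1r QZ scaleN1r.
have QB x y : Q (x - y) = Q x - Q y by rewrite QD QN.
have QP x : Q (P x) = 0 by rewrite /Q /projQ -/P PP subrr.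
have PQ x : P (Q x) = 0 by rewrite /Q /projQ -/P PD -scaleN1r PZ PP scaleN1r subrr.
have gz : is_generator V z 0.
  apply/hgen; rewrite -/Q /Q /projQ -/P Pz subrr.
  rewrite /is_generator; apply: cvg_near_cst.
  apply: filterS (nbhs_right_ge 0) => h h0.
  by rewrite /diff_quot (@V_00 _ _ _ hU h h0) subrr scaler0.
have Vz t : 0 <= t -> V t z = z by move=> t0; apply: (@key _ _ _ hV).
have VP t x : 0 <= t -> V t (P x) = P x.
  by move=> t0; rewrite {1}/P /projP (@V_Z _ _ _ hV) // Vz.
have VQ t x : 0 <= t -> V t (Q x) = V t x - P x.
  by move=> t0; rewrite {1}/Q /projQ -/P (@V_B _ _ _ hV) // VP.
have Pc : continuous P.
  move=> x; apply: cvgZr_tmp; apply: cvgMr_tmp; exact: (@ip_cont _ _ _ hip).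
have Qc : continuous Q.
  by move=> x; apply: cvgB; [exact: cvg_id | exact: Pc].
split.
- move=> t t0 a x y.
  by rewrite -/P -/Q (@V_lin _ _ _ hV) // QD QZ PD PZ [in RHS]scalerDr addrACA.
- move=> t t0 x; apply: cvgD; first exact: Pc.
  by apply: continuous_cvg; [exact: Qc | exact: (@V_cont _ _ _ hV)].
- by move=> x; rewrite -/P -/Q (@V_0 _ _ _ hV) /Q /projQ -/P addrCA subrr addr0.
- move=> s t s0 t0 x.
  rewrite -/P -/Q (@V_sg _ _ _ hV) // PD PP PQ addr0 (@V_D _ _ _ hV) // VP //.
  by rewrite VQ // QD QB !QP add0r subr0.
- move=> x.
  have h := cvgD (cvg_cst (P x)) (continuous_cvg _ (Qc x) (@V_sc _ _ _ hV x)).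
  have e : P x + Q x = x by rewrite /Q /projQ -/P addrCA subrr addr0.
  by rewrite e in h; exact: h.
Qed.
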